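(* Let $\{(\varrho_i^k,u^k_{i-1/2})\}$ be a numerical solution of the scheme. Then for every $m=1,\dots,M$ there exist numbers $\varrho^*_{i,k}$ between $\varrho_i^{k-1}$ and $\varrho_i^k$ and $\theta^k_{i+1/2}$ between $\varrho_i^k$ and $\varrho_{i+1}^k$ such that $$\Delta x\sum_{i=0}^{N-1}\Big(\varrho_i^m\frac{|\widehat u_i^m|^2}2+\frac{p(\varrho_i^m)}{\gamma-1}\Big)+\mu\,\Delta t\,\Delta x\sum_{k=1}^m\sum_{i=0}^{N-1}|\partial_iu^k|^2+\mathcal N_1+\mathcal N_2+\mathcal N_3+\mathcal N_4=\Delta x\sum_{i=0}^{N-1}\Big(\varrho_i^0\frac{|\widehat u_i^0|^2}2+\frac{p(\varrho_i^0)}{\gamma-1}\Big),$$ where $\mathcal N_1=\frac{(\Delta t)^2\Delta x}{2(\gamma-1)}\sum_{k=1}^m\sum_{i=0}^{N-1}p''(\varrho^*_{i,k})|\partial_t^k\varrho_i|^2$, $\mathcal N_2=\frac{\Delta t(\Delta x)^2}{2(\gamma-1)}\sum_{k=1}^m\sum_{i=0}^{N-2}p''(\theta^k_{i+1/2})|\partial_{i+1/2}\varrho^k|^2|u^k_{i+1/2}|$, $\mathcal N_3=\frac{(\Delta t)^2\Delta x}{2}\sum_{k=1}^m\sum_{i=0}^{N-1}\varrho_i^{k-1}|\partial_t^k\widehat u_i|^2$, $\mathcal N_4=\frac{\Delta t(\Delta x)^2}{2}\sum_{k=1}^m\sum_{i=0}^{N-2}|\operatorname{Up}(\varrho^ku^k)_{i+1/2}|\,|\partial_{i+1/2}\widehat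 u^k|^2$. In particular all $\mathcal N_j\ge0$.
   Context: Fix $L>0$, $\mu>0$, $a>0$, $\gamma>1$, $p(\varrho)=a\varrho^\gamma$, $T>0$, integers $N,M\ge1$, $\Delta x=L/N$, $\Delta t=T/M$. Nodes $x_{i-1/2}=i\Delta x$ ($i=0,\dots,N$), cells $[x_{i-1/2},x_{i+1/2}]$ ($i=0,\dots,N-1$). Unknowns $\varrho_i^k$ ($i=0,\dots,N-1$), $u^k_{i-1/2}$ ($i=0,\dots,N$), $k=0,\dots,M$, with $u^k_{-1/2}=u^k_{N-1/2}=0$ for $k\ge1$. Notation: $z^+=\max\{z,0\}$, $z^-=\min\{z,0\}$; $\widehat u_i=\frac{u_{i-1/2}+u_{i+1/2}}2$; for $i=0,\dots,N-2$, $\operatorname{Up}(\varrho u)_{i+1/2}=\varrho_iu^+_{i+1/2}+\varrho_{i+1}u^-_{i+1/2}$, $\operatorname{Up}(\varrho\widehat uu)_{i+1/2}=\varrho_i\widehat u_iu^+_{i+1/2}+\varrho_{i+1}\widehat u_{i+1}u^-_{i+1/2}$, and both fluxes vanish at nodes $-1/2$, $N-1/2$; $\partial_{i+1/2}f=(f_{i+1}-f_i)/\Delta x$ (cell quantities), $\partial_iv=(v_{i+1/2}-v_{i-1/2})/\Delta x$ (nodal quantities), $\Delta_{i+1/2}u=(u_{i-1/2}-2u_{i+1/2}+u_{i+3/2})/\Delta x^2$, $\partial_t^kf=(f^k-f^{k-1})/\Delta t$. Initial values: $\varrho_0\in L^\gamma(0,L)$, $\varrho_0>0$, $u_0$ bounded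 on $[0,L]$; $\varrho_i^0=\frac1{\Delta x}\int_{x_{i-1/2}}^{x_{i+1/2}}\varrho_0$, $u^0_{i-1/2}=u_0(x_{i-1/2})$. The scheme, for $k=1,\dots,M$: $\partial_t^k\varrho_i+\partial_i\operatorname{Up}(\varrho^ku^k)=0$ ($i=0,\dots,N-1$) and $\partial_t^k\big(\frac{\varrho_i\widehat u_i+\varrho_{i+1}\widehat u_{i+1}}2\big)+\frac{\operatorname{Up}(\varrho^k\widehat u^ku^k)_{i+3/2}-\operatorname{Up}(\varrho^k\widehat u^ku^k)_{i-1/2}}{2\Delta x}=\mu\Delta_{i+1/2}u^k-\partial_{i+1/2}p(\varrho^k)$ ($i=0,\dots,N-2$). A numerical solution is any collection of numbers solving this system; its densities are strictly positive. *)

(* Defs.v *)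
From HB Require Import structures.
From mathcomp Require Import all_boot all_order all_algebra.
From mathcomp Require Import all_classical all_reals all_analysis.
Set Implicit Arguments. Unset Strict Implicit. Unset Printing Implicit Defensive.
Import Order.TTheory GRing.Theory Num.Theory.
Local Open Scope classical_set_scope.
Local Open Scope ring_scope.

(* Conventions:
   rho k i = rho_i^k          (cell i = 0..N-1, time level k = 0..M)
   u   k j = u^k_{j-1/2}      (node j = 0..N, i.e. u k (i+1) = u^k_{i+1/2}) *)

Section Defs.
Variable R : realType.

Definition posp (z : R) : R := Num.max z 0.
Definition negp (z : R) : R := Num.min z 0.

Definition pres (a gamma r : R) : R := a * r `^ gamma.
Definition pres2 (a gamma r : R) : R := a * gamma * (gamma - 1) * r `^ (gamma - 2).

Definition uhat (u : nat -> nat -> R) (k i : nat) : R := (u k i + u k i.+1) / 2.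

(* Up(rho u) at node j (j = i+1 <-> x_{i+1/2}); zero at boundary nodes 0, N *)
Definition Up_ru (N : nat) (rho u : nat -> nat -> R) (k j : nat) : R :=
  if (0 < j)%N && (j < N)%N then
    rho k j.-1 * posp (u k j) + rho k j * negp (u k j)
  else 0.

Definition Up_ruu (N : nat) (rho u : nat -> nat -> R) (k j : nat) : R :=
  if (0 < j)%N && (j < N)%N then
    rho k j.-1 * uhat u k j.-1 * posp (u k j) + rho k j * uhat u k j * negp (u k j)
  else 0.

Definition is_scheme_solution (N M : nat) (dx dt mu a gamma : R)
  (rho u : nat -> nat -> R) : Prop :=
  forall k, (1 <= k <= M)%N ->
    [/\ u k 0%N = 0, u k N = 0,
     (forall i, (i < N)%N ->
        (rho k i - rho k.-1 i) / dt + (Up_ru N rho u k i.+1 - Up_ru N rho u k i) / dx = 0)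
   & (forall i, (i.+2 <= N)%N ->
        ((rho k i * uhat u k i + rho k i.+1 * uhat u k i.+1) / 2
         - (rho k.-1 i * uhat u k.-1 i + rho k.-1 i.+1 * uhat u k.-1 i.+1) / 2) / dt
        + (Up_ruu N rho u k i.+2 - Up_ruu N rho u k i) / (2 * dx)
        = mu * (u k i - 2 * u k i.+1 + u k i.+2) / dx ^+ 2
          - (pres a gamma (rho k i.+1) - pres a gamma (rho k i)) / dx)].

Definition energy (N : nat) (dx a gamma : R) (rho u : nat -> nat -> R) (k : nat) : R :=
  dx * \sum_(0 <= i < N) (rho k i * (uhat u k i) ^+ 2 / 2 + pres a gamma (rho k i) / (gamma - 1)).

Definition between (x y z : R) : Prop := Num.min y z <= x <= Num.max y z.

End Defs.

(* Main.v *)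
Require Import Defs.
From HB Require Import structures.
From mathcomp Require Import all_boot all_order all_algebra.
From mathcomp Require Import all_classical all_reals all_analysis measurable_realfun.
From mathcomp Require Import ring lra.
Import Order.TTheory GRing.Theory Num.Theory.
Local Open Scope classical_set_scope.
Local Open Scope ring_scope.

Definition dp {R : realType} (a g t : R) := a * g * t `^ (g - 1).

Lemma dpres {R : realType} (a g t : R) : 0 < t ->
  is_derive t 1 (pres a g) (a * (g * t `^ (g - 1))).
Proof. move=> t0; exact: (is_deriveZ a (is_derive1_powR g t0)). Qed.


Lemma ddp {R : realType} (a g t : R) : 0 < t ->
  is_derive t 1 (dp a g) (pres2 a g t).
Proof.
move=> t0; rewrite /dp /pres2.
have H := is_deriveZ (a * g) (is_derive1_powR (g - 1) t0).
have E : (a * g) *: ((g - 1) * t `^ (g - 1 - 1)) = a * g * (g - 1) * t `^ (g - 2).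
  rewrite /GRing.scale /= -!mulrA; congr (_ * (_ * (_ * _))); congr (_ `^ _); lra.
rewrite -E; exact: H.
Qed.

Lemma taylor2 {R : realType} (a g x y : R) : 0 < x -> 0 < y ->
  exists xi, between xi x y /\
    pres a g y - pres a g x - dp a g x * (y - x) = pres2 a g xi * (y - x) ^+ 2 / 2.
Proof.
move=> x0 y0.
have [->|nxy] := eqVneq x y.
  exists y; split; last by rewrite !subrr expr0n /= !mulr0 !mul0r subr0.
  by rewrite /between minxx maxxx lexx.
set K := (pres a g y - pres a g x - dp a g x * (y - x)) / (y - x) ^+ 2.
pose G t := pres a g t + dp a g t * (y - t) + K * (y - t) ^+ 2.
pose dG t := (y - t) * (pres2 a g t - 2 * K).
have dGt : forall t : R, 0 < t -> is_derive t 1 G (dG t).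
  move=> t t0.
  have H1 := @dpres R a g t t0.
  have H2 := @ddp R a g t t0.
  have H3 : is_derive t 1 (fun s : R => y - s) (-1).
    have := is_deriveB (is_derive_cst y t 1) (is_derive_id t 1).
    by rewrite sub0r.
  have H4 := is_deriveM H2 H3.
  have H5 := is_deriveX 2 H3.
  have H6 := is_deriveZ K H5.
  have H7 := is_deriveD (is_deriveD H1 H4) H6.
  move: H7; set D := (X in is_derive _ _ _ X) => H7.
  have E : D = dG t.
    rewrite /D /dG /dp /= /GRing.scale /=. rewrite expr1.
    by field.
  rewrite -E; exact: H7.
have Gxy : G x = G y.
  rewrite /G subrr expr0n /= !mulr0 !addr0 /K.
  field; by rewrite subr_eq0 eq_sym.
suff [c cin Hc] : exists2 c, Num.min x y < c < Num.max x y & pres2 a g c = 2 * K.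
  exists c; split; first by rewrite /between !ltW //; case/andP: cin.
  rewrite Hc /K; field; by rewrite subr_eq0 eq_sym.
have lt : Num.min x y < Num.max x y.
  by case: (ltgtP x y) nxy => h //= _; rewrite gt_min !lt_max ?h ?orbT.
have pos : 0 < Num.min x y by rewrite lt_min x0 y0.
have Gpos : forall t, Num.min x y <= t -> is_derive t 1 G (dG t).
  by move=> t ht; apply: dGt; exact: lt_le_trans pos ht.
have [c cin Hc] : exists2 c, c \in `]Num.min x y, Num.max x y[ &
    G (Num.max x y) - G (Num.min x y) = dG c * (Num.max x y - Num.min x y).
  apply: MVT lt _ _.
  - move=> t; rewrite in_itv /= => /andP[h _]; apply: Gpos; exact: ltW.
  - apply: derivable_within_continuous => t; rewrite in_itv /= => /andP[h _].
    by case: (Gpos t h).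
move: cin; rewrite in_itv /= => /andP[c1 c2].
exists c; first by rewrite c1 c2.
have Heq : G (Num.max x y) = G (Num.min x y).
  by case: (ltgtP x y) nxy => h //= _; rewrite Gxy.
move: Hc; rewrite Heq subrr => /esym/eqP; rewrite mulf_eq0 subr_eq0.
rewrite (gt_eqF lt) orbF /dG mulf_eq0 subr_eq0 => /orP[/eqP yc|].
  rewrite -yc gt_min lt_max ltxx !orbF in c1 c2.
  by move: (lt_trans c1 c2); rewrite ltxx.
by rewrite subr_eq0 => /eqP.
Qed.

Lemma le_1_powR {R : realType} (g x : R) : 1 < g -> 0 <= x -> x <= 1 + x `^ g.
Proof.
move=> g1 x0.
have [x1|x1] := leP x 1.
  by rewrite -[x]addr0 lerD // powR_ge0.
have : x `^ 1 <= x `^ g.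
  by rewrite ler_powR ?ltW //.
rewrite powRr1 // => h; apply: (le_trans h); rewrite lerDr; lra.
Qed.

Lemma rho0_pos {R : realType} (L gam : R) (rho0 : R -> R) (c d : R) :
  1 < gam -> 0 <= c -> c < d -> d <= L ->
  measurable_fun `]0, L[ rho0 ->
  (\int[lebesgue_measure]_(x in `]0%R, L[) (`|rho0 x| `^ gam)%:E < +oo)%E ->
  (forall x, 0 < x < L -> 0 < rho0 x) ->
  0 < Rintegral lebesgue_measure `[c, d] rho0.
Proof.
move=> g1 c0 cd dL mrho fin pos.
have sub : `]c, d[ `<=` `]0, L[.
  move=> x /=; rewrite !in_itv /= => /andP[h1 h2].
  by rewrite (le_lt_trans c0 h1) (lt_le_trans h2 dL).
have mf : measurable_fun `]c, d[ rho0 := measurable_funS (measurable_itv _) sub mrho.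
have mfE : measurable_fun (`]c, d[ : set R) (EFin \o rho0 : R -> \bar R) by apply/measurable_EFinP.
have posc : forall x, x \in `]c, d[ -> 0 < rho0 x.
  move=> x xin; apply: pos; move: (sub x); rewrite /= !in_itv /=; apply.
  by rewrite in_itv /= in xin.
rewrite /Rintegral integral_itv_bndoo //.
set I := (\int[_]_(x in _) _)%E.
have I0 : (0 <= I)%E.
  apply: integral_ge0 => x xin; rewrite lee_fin ltW //; exact: posc xin.
apply: fine_gt0; apply/andP; split.
  rewrite lt0e I0 andbT; apply/negP => /eqP Ieq.
  have : (\int[lebesgue_measure]_(x in `]c, d[) `|(rho0 x)%:E|)%E = 0.
    rewrite -Ieq; apply: eq_integral => x xin; rewrite gee0_abs // lee_fin ltW //.
    exact: posc (set_mem xin).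
  move=> H0; have [Nn [mN N0 sN]] := (ae_eq_integral_abs lebesgue_measure (measurable_itv _) mfE).1 H0.
  have sub2 : `]c, d[ `<=` Nn.
    move=> x xin; apply: sN => /= h; have := h xin; have := posc x xin.
    by move=> /gt_eqF; rewrite /= => /negbT /eqP + [].
  have mcd : measurable (`]c, d[ : set (measurableTypeR R)) by exact: measurable_itv.
  have := @subset_measure0 _ _ _ (@lebesgue_measure R) _ _ mcd mN sub2 N0.
  have := lebesgue_measure_itv (R:=R) `]c, d[; rewrite /= lte_fin cd => -> /eqP.
  rewrite -EFinD eqe subr_eq0. by rewrite gt_eqF.
have mpow : measurable_fun (`]0, L[ : set R) (fun x => (`|rho0 x| `^ gam)%:E).
  apply/measurable_EFinP; apply: (measurableT_comp (measurable_powR gam)).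
  apply: measurableT_comp mrho; exact: normr_measurable.
have mpow' : measurable_fun (`]c, d[ : set R) (fun x => (`|rho0 x| `^ gam)%:E).
  exact: measurable_funS (measurable_itv _) sub mpow.
have mone : measurable_fun (`]c, d[ : set R) (fun x : R => (1%:E : \bar R)).
  exact: measurable_cst.
apply: (@le_lt_trans _ _ (\int[lebesgue_measure]_(x in `]c, d[) ((1%:E : \bar R) + (`|rho0 x| `^ gam)%:E))%E).
  apply: ge0_le_integral => //.
  - by move=> x xin; rewrite lee_fin ltW //; exact: posc.
  - exact: emeasurable_funD.
  - move=> x xin; have := ltW (posc x xin) => h.
    by rewrite -EFinD lee_fin ger0_norm //; apply: le_1_powR.
rewrite ge0_integralD //. all: try by move=> x _; rewrite lee_fin ?powR_ge0.
apply: lte_add_pinfty.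
  rewrite (_ : (fun x => _) = cst 1%E) // integral_cst //.
  have := lebesgue_measure_itv (R:=R) `]c, d[; rewrite /= lte_fin cd => ->.
  by rewrite mul1e -EFinD ltry.
apply: le_lt_trans fin; apply: ge0_subset_integral => //.
Qed.

Lemma sumL2 {R : realType} (N : nat) (u c : nat -> R) : (1 <= N)%N ->
  u 0%N = 0 -> u N = 0 ->
  \sum_(0 <= i < N.-1) u i.+1 * (c i - c i.+1) =
  \sum_(0 <= i < N) c i * (u i.+1 - u i).
Proof.
case: N => [//|n] _ u0 uN /=.
have E1 : \sum_(0 <= i < n.+1) c i * u i.+1 = \sum_(0 <= i < n) c i * u i.+1.
  by rewrite big_nat_recr //= uN mulr0 addr0.
have E2 : \sum_(0 <= i < n.+1) c i * u i = \sum_(0 <= i < n) c i.+1 * u i.+1.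
  by rewrite big_nat_recl //= u0 mulr0 add0r.
under [RHS]eq_bigr do rewrite mulrBr.
rewrite sumrB E1 E2 -sumrB; apply: eq_bigr => i _; ring.
Qed.

Lemma sumL1 {R : realType} (N : nat) (u c : nat -> R) : (1 <= N)%N ->
  u 0%N = 0 -> u N = 0 ->
  \sum_(0 <= i < N.-1) u i.+1 * (c i + c i.+1) =
  \sum_(0 <= i < N) c i * (u i + u i.+1).
Proof.
case: N => [//|n] _ u0 uN /=.
have E1 : \sum_(0 <= i < n.+1) c i * u i.+1 = \sum_(0 <= i < n) c i * u i.+1.
  by rewrite big_nat_recr //= uN mulr0 addr0.
have E2 : \sum_(0 <= i < n.+1) c i * u i = \sum_(0 <= i < n) c i.+1 * u i.+1.
  by rewrite big_nat_recl //= u0 mulr0 add0r.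
under [RHS]eq_bigr do rewrite mulrDr.
rewrite big_split /= E1 E2 -big_split; apply: eq_bigr => i _ /=; ring.
Qed.


Lemma dp_mul {R : realType} (a g r : R) : 0 < r -> r * dp a g r = g * pres a g r.
Proof.
move=> r0; rewrite /dp /pres.
have -> : r * (a * g * r `^ (g - 1)) = a * g * (r `^ (g - 1) * r `^ 1) by rewrite powRr1 ?ltW //; ring.
rewrite -powRD; last by rewrite (gt_eqF r0) implybT.
rewrite subrK; ring.
Qed.

Lemma node_kin {R : realType} (r0 r1 v h0 h1 : R) : 0 <= r0 -> 0 <= r1 ->
  (r0 * h0 * posp v + r1 * h1 * negp v) * (h0 - h1)
  - (r0 * posp v + r1 * negp v) * (h0 ^+ 2 / 2 - h1 ^+ 2 / 2)
  = `|r0 * posp v + r1 * negp v| * (h1 - h0) ^+ 2 / 2.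
Proof.
move=> r00 r10.
have [v0|v0] := leP 0 v.
  have E1 : posp v = v by rewrite /posp max_l.
  have E2 : negp v = 0 by rewrite /negp min_r.
  rewrite E1 E2 !mulr0 !addr0 ger0_norm ?mulr_ge0 //; by field.
have E1 : posp v = 0 by rewrite /posp (max_r (ltW v0)).
have E2 : negp v = v by rewrite /negp (min_l (ltW v0)).
rewrite E1 E2 !mulr0 !add0r ler0_norm; last by rewrite mulr_ge0_le0 // ltW.
by field.
Qed.

Lemma between_sym {R : realType} (x y z : R) : between x y z -> between x z y.
Proof. by rewrite /between minC maxC. Qed.

Lemma node_pres {R : realType} (a g r0 r1 v : R) : 0 < r0 -> 0 < r1 ->
  exists th, between th r0 r1 /\
  (r0 * posp v + r1 * negp v) * (dp a g r0 - dp a g r1)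
  = (g - 1) * v * (pres a g r0 - pres a g r1) + `|v| * (pres2 a g th * (r1 - r0) ^+ 2 / 2).
Proof.
move=> p0 p1.
have e0 := dp_mul a g r0 p0; have e1 := dp_mul a g r1 p1.
have [v0|v0] := leP 0 v.
  have E1 : posp v = v by rewrite /posp max_l.
  have E2 : negp v = 0 by rewrite /negp min_r.
  have [th [bt T]] := taylor2 a g r1 r0 p1 p0.
  exists th; split; first exact: between_sym.
  have -> : (r1 - r0) ^+ 2 = (r0 - r1) ^+ 2 by ring.
  rewrite -T E1 E2 ger0_norm //.
  apply/eqP; rewrite -subr_eq0; apply/eqP.
  transitivity (v * ((r0 * dp a g r0 - g * pres a g r0) - (r1 * dp a g r1 - g * pres a g r1))).
    by ring.
  by rewrite e0 e1 !subrr mulr0.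
have E1 : posp v = 0 by rewrite /posp (max_r (ltW v0)).
have E2 : negp v = v by rewrite /negp (min_l (ltW v0)).
have [th [bt T]] := taylor2 a g r0 r1 p0 p1.
exists th; split; first by [].
rewrite -T E1 E2 ltr0_norm //.
apply/eqP; rewrite -subr_eq0; apply/eqP.
transitivity (v * ((r0 * dp a g r0 - g * pres a g r0) - (r1 * dp a g r1 - g * pres a g r1))).
  by ring.
by rewrite e0 e1 !subrr mulr0.
Qed.

Section Step.
Variables (R : realType) (N : nat) (dx dt mu a g : R) (rho u : nat -> nat -> R) (k : nat)
  (rsk thk : nat -> R).
Hypotheses (N1 : (1 <= N)%N) (dx0 : 0 < dx) (dt0 : 0 < dt) (g1 : 1 < g).
Hypotheses (uk0 : u k 0%N = 0) (ukN : u k N = 0).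
Hypothesis mass : forall i, (i < N)%N ->
  (rho k i - rho k.-1 i) / dt + (Up_ru N rho u k i.+1 - Up_ru N rho u k i) / dx = 0.
Hypothesis mom : forall i, (i.+2 <= N)%N ->
  ((rho k i * uhat u k i + rho k i.+1 * uhat u k i.+1) / 2
   - (rho k.-1 i * uhat u k.-1 i + rho k.-1 i.+1 * uhat u k.-1 i.+1) / 2) / dt
  + (Up_ruu N rho u k i.+2 - Up_ruu N rho u k i) / (2 * dx)
  = mu * (u k i - 2 * u k i.+1 + u k i.+2) / dx ^+ 2
    - (pres a g (rho k i.+1) - pres a g (rho k i)) / dx.
Hypothesis rpos : forall i, (i < N)%N -> 0 < rho k i.
Hypothesis rpos' : forall i, (i < N)%N -> 0 <= rho k.-1 i.
Hypothesis Trs : forall i, (i < N)%N ->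
  pres a g (rho k.-1 i) - pres a g (rho k i) - dp a g (rho k i) * (rho k.-1 i - rho k i)
  = pres2 a g (rsk i) * (rho k.-1 i - rho k i) ^+ 2 / 2.
Hypothesis Tth : forall i, (i.+2 <= N)%N ->
  (rho k i * posp (u k i.+1) + rho k i.+1 * negp (u k i.+1)) * (dp a g (rho k i) - dp a g (rho k i.+1))
  = (g - 1) * u k i.+1 * (pres a g (rho k i) - pres a g (rho k i.+1))
    + `|u k i.+1| * (pres2 a g (thk i) * (rho k i.+1 - rho k i) ^+ 2 / 2).

Local Notation r i := (rho k i).
Local Notation r' i := (rho k.-1 i).
Local Notation h i := (uhat u k i).
Local Notation h' i := (uhat u k.-1 i).
Local Notation F j := (Up_ru N rho u k j).
Local Notation G j := (Up_ruu N rho u k j).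
Local Notation v j := (u k j).
Local Notation P i := (pres a g (rho k i)).
Local Notation P' i := (pres a g (rho k.-1 i)).

Let dxn : dx != 0. Proof. exact: lt0r_neq0. Qed.
Let dtn : dt != 0. Proof. exact: lt0r_neq0. Qed.

Let M i (Hi : (i < N)%N) : (r i - r' i) * dx + dt * (F i.+1 - F i) = 0.
Proof.
have := mass i Hi; move/(congr1 (fun z => z * (dt * dx))); rewrite mul0r => <-.
by field; apply/andP.
Qed.

Let F0 : F 0%N = 0. Proof. by rewrite /Up_ru ltnn. Qed.
Let FN : F N = 0. Proof. by rewrite /Up_ru ltnn andbF. Qed.
Let G0 : G 0%N = 0. Proof. by rewrite /Up_ruu ltnn. Qed.
Let GN : G N = 0. Proof. by rewrite /Up_ruu ltnn andbF. Qed.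

Let b i := (r i * h i - r' i * h' i) * dx + dt * (G i.+1 - G i).
Let e i := mu * dt / dx * (v i - v i.+1) + dt * P i.

Let mom' i (Hi : (i.+2 <= N)%N) : b i / 2 + b i.+1 / 2 = e i - e i.+1.
Proof.
have := mom i Hi; move/(congr1 (fun z => z * (dt * dx))).
rewrite /b /e => E.
apply: eq_trans (eq_trans _ E) _; by field; rewrite ?dxn ?dtn.
Qed.

Let Kin : \sum_(0 <= i < N) b i * h i = \sum_(0 <= i < N) e i * (v i.+1 - v i).
Proof.
have -> : \sum_(0 <= i < N) b i * h i = \sum_(0 <= i < N) (b i / 2) * (v i + v i.+1).
  by apply: eq_bigr => i _; rewrite /uhat; field.
rewrite -sumL1 // -sumL2 //; apply: eq_big_nat => i /andP[_ Hi].
rewrite mom' //; move: Hi; case: N N1 => // n _ /=; by [].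
Qed.

Let KinD i (Hi : (i < N)%N) : b i * h i =
  dx * (r i * h i ^+ 2 / 2 - r' i * h' i ^+ 2 / 2 + r' i * (h i - h' i) ^+ 2 / 2)
  + dt * (h i * (G i.+1 - G i) - h i ^+ 2 / 2 * (F i.+1 - F i)).
Proof.
rewrite /b; apply/eqP; rewrite -subr_eq0; apply/eqP.
transitivity (h i ^+ 2 / 2 * ((r i - r' i) * dx + dt * (F i.+1 - F i))); first by field.
by rewrite M // mulr0.
Qed.

Let Conv : \sum_(0 <= i < N) (h i * (G i.+1 - G i) - h i ^+ 2 / 2 * (F i.+1 - F i))
  = \sum_(0 <= i < N.-1) `|F i.+1| * (h i.+1 - h i) ^+ 2 / 2.
Proof.
rewrite sumrB.
rewrite -(sumL2 N (fun j => G j) (fun i => h i) N1 G0 GN).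
rewrite -(sumL2 N (fun j => F j) (fun i => h i ^+ 2 / 2) N1 F0 FN).
rewrite -sumrB; apply: eq_big_nat => i /andP[_ Hi].
have Hi' : (i.+1 < N)%N by move: Hi; case: N N1 => // n _ /=.
rewrite /Up_ru /Up_ruu /= Hi' /=.
rewrite -node_kin; first by field.
- apply: ltW; apply: rpos; exact: ltnW.
- by apply/ltW/rpos.
Qed.

Let Pres1 : dx * (\sum_(0 <= i < N) (P i - P' i + pres2 a g (rsk i) * (r' i - r i) ^+ 2 / 2))
  + dt * (\sum_(0 <= i < N) dp a g (r i) * (F i.+1 - F i)) = 0.
Proof.
have Z : \sum_(0 <= i < N) dp a g (r i) * ((r i - r' i) * dx + dt * (F i.+1 - F i)) = 0.
  rewrite (eq_big_nat _ _ (F2 := fun _ => 0)); first by rewrite big1_eq.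
  by move=> i /andP[_ Hi]; rewrite M // mulr0.
apply: eq_trans _ Z; rewrite !mulr_sumr -big_split /=; apply: eq_big_nat => i /andP[_ Hi].
have T := Trs i Hi.
have -> : pres2 a g (rsk i) * (r' i - r i) ^+ 2 / 2 =
  P' i - P i - dp a g (r i) * (r' i - r i) by rewrite T.
by ring.
Qed.

Let PresF : \sum_(0 <= i < N) dp a g (r i) * (F i.+1 - F i)
  = (g - 1) * \sum_(0 <= i < N) P i * (v i.+1 - v i)
    + \sum_(0 <= i < N.-1) `|v i.+1| * (pres2 a g (thk i) * (r i.+1 - r i) ^+ 2 / 2).
Proof.
rewrite -(sumL2 N (fun j => F j) (fun i => dp a g (r i)) N1 F0 FN).
rewrite -(sumL2 N (fun j => v j) (fun i => P i) N1 uk0 ukN).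
rewrite mulr_sumr -big_split /=; apply: eq_big_nat => i /andP[_ Hi].
have Hi' : (i.+2 <= N)%N by move: Hi; case: N N1 => // n _ /=.
rewrite /Up_ru /= Hi' /= Tth //; ring.
Qed.

Lemma step :
  energy N dx a g rho u k
  + mu * dt * dx * \sum_(0 <= i < N) ((v i.+1 - v i) / dx) ^+ 2
  + dt ^+ 2 * dx / (2 * (g - 1)) *
      \sum_(0 <= i < N) pres2 a g (rsk i) * ((r i - r' i) / dt) ^+ 2
  + dt * dx ^+ 2 / (2 * (g - 1)) *
      \sum_(0 <= i < N.-1) pres2 a g (thk i) * ((r i.+1 - r i) / dx) ^+ 2 * `|v i.+1|
  + dt ^+ 2 * dx / 2 *
      \sum_(0 <= i < N) r' i * ((h i - h' i) / dt) ^+ 2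
  + dt * dx ^+ 2 / 2 *
      \sum_(0 <= i < N.-1) `|F i.+1| * ((h i.+1 - h i) / dx) ^+ 2
  = energy N dx a g rho u k.-1.
Proof.
pose KK := \sum_(0 <= i < N) r i * h i ^+ 2 / 2.
pose KK' := \sum_(0 <= i < N) r' i * h' i ^+ 2 / 2.
pose PP := \sum_(0 <= i < N) P i.
pose PP' := \sum_(0 <= i < N) P' i.
pose S1 := \sum_(0 <= i < N) pres2 a g (rsk i) * (r' i - r i) ^+ 2 / 2.
pose S2 := \sum_(0 <= i < N.-1) `|v i.+1| * (pres2 a g (thk i) * (r i.+1 - r i) ^+ 2 / 2).
pose S3 := \sum_(0 <= i < N) r' i * (h i - h' i) ^+ 2 / 2.
pose S4 := \sum_(0 <= i < N.-1) `|F i.+1| * (h i.+1 - h i) ^+ 2 / 2.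
pose V := \sum_(0 <= i < N) (v i.+1 - v i) ^+ 2.
pose Pi := \sum_(0 <= i < N) P i * (v i.+1 - v i).
have EK : dx * (KK - KK' + S3) + dt * S4 = - (mu * dt / dx) * V + dt * Pi.
  have KinS : \sum_(0 <= i < N) b i * h i =
    \sum_(0 <= i < N) (dx * (r i * h i ^+ 2 / 2 - r' i * h' i ^+ 2 / 2 + r' i * (h i - h' i) ^+ 2 / 2)
    + dt * (h i * (G i.+1 - G i) - h i ^+ 2 / 2 * (F i.+1 - F i))).
    by apply: eq_big_nat => i /andP[_ Hi]; exact: KinD.
  have := Kin; rewrite KinS big_split /= -!mulr_sumr Conv -/S4.
  rewrite big_split sumrB /= -/KK -/KK' -/S3 => ->.
  rewrite /V /Pi mulr_sumr mulr_sumr -big_split /=; apply: eq_bigr => i _.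
  rewrite /e; ring.
have EP : dx * (PP - PP' + S1) + dt * ((g - 1) * Pi + S2) = 0.
  by have := Pres1; rewrite PresF big_split sumrB.
have En : forall l, energy N dx a g rho u l =
   dx * (\sum_(0 <= i < N) rho l i * uhat u l i ^+ 2 / 2 + (\sum_(0 <= i < N) pres a g (rho l i)) / (g - 1)).
  by move=> l; rewrite /energy big_split /= mulr_suml.
rewrite !En -/KK -/KK' -/PP -/PP'.
have -> : \sum_(0 <= i < N) ((v i.+1 - v i) / dx) ^+ 2 = V / dx ^+ 2.
  by rewrite /V mulr_suml; apply: eq_bigr => i _; field.
have -> : \sum_(0 <= i < N) pres2 a g (rsk i) * ((r i - r' i) / dt) ^+ 2 = 2 * S1 / dt ^+ 2.
  by rewrite /S1 mulr_sumr mulr_suml; apply: eq_bigr => i _; field.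
have -> : \sum_(0 <= i < N.-1) pres2 a g (thk i) * ((r i.+1 - r i) / dx) ^+ 2 * `|v i.+1| = 2 * S2 / dx ^+ 2.
  by rewrite /S2 mulr_sumr mulr_suml; apply: eq_bigr => i _; field.
have -> : \sum_(0 <= i < N) r' i * ((h i - h' i) / dt) ^+ 2 = 2 * S3 / dt ^+ 2.
  by rewrite /S3 mulr_sumr mulr_suml; apply: eq_bigr => i _; field.
have -> : \sum_(0 <= i < N.-1) `|F i.+1| * ((h i.+1 - h i) / dx) ^+ 2 = 2 * S4 / dx ^+ 2.
  by rewrite /S4 mulr_sumr mulr_suml; apply: eq_bigr => i _; field.
have g1n : g - 1 != 0 by rewrite subr_eq0 gt_eqF.
apply/eqP; rewrite -subr_eq0; apply/eqP.
transitivity ((dx * (KK - KK' + S3) + dt * S4 - (- (mu * dt / dx) * V + dt * Pi))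
   + (dx * (PP - PP' + S1) + dt * ((g - 1) * Pi + S2)) / (g - 1)).
  by field; rewrite ?g1n ?dxn ?dtn.
by rewrite EK EP subrr mul0r addr0.
Qed.

End Step.

Lemma telesc {R : realType} (f X : nat -> R) (m : nat) :
  (forall k, (1 <= k <= m)%N -> f k + X k = f k.-1) ->
  f m + \sum_(1 <= k < m.+1) X k = f 0%N.
Proof.
elim: m => [|m IH] H; first by rewrite big_geq // addr0.
rewrite big_nat_recr //= addrA [f m.+1 + _]addrC -addrA.
rewrite (H m.+1) ?leqnn ?ltn0Sn //= addrC; apply: IH => k /andP[k1 km]; apply: H; rewrite k1 /=.
exact: leqW.
Qed.
Theorem proposition3p3 (R : realType) (L mu a gamma T : R) (N M : nat)
  (rho0 u0 : R -> R) (rho u : nat -> nat -> R) :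
  0 < L -> 0 < mu -> 0 < a -> 1 < gamma -> 0 < T -> (1 <= N)%N -> (1 <= M)%N ->
  let dx := L / N%:R in
  let dt := T / M%:R in
  (* initial data: rho0 in L^gamma(0,L), rho0 > 0, u0 bounded on [0,L] *)
  measurable_fun `]0, L[ rho0 ->
  (\int[lebesgue_measure]_(x in `]0%R, L[) (`|rho0 x| `^ gamma)%:E < +oo)%E ->
  (forall x, 0 < x < L -> 0 < rho0 x) ->
  (exists B : R, forall x, 0 <= x <= L -> `|u0 x| <= B) ->
  (forall i, (i < N)%N ->
     rho 0%N i = dx^-1 * Rintegral lebesgue_measure `[i%:R * dx, i.+1%:R * dx] rho0) ->
  (forall i, (i <= N)%N -> u 0%N i = u0 (i%:R * dx)) ->
  (* the scheme *)
  is_scheme_solution N M dx dt mu a gamma rho u ->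
  (* densities of the numerical solution are strictly positive *)
  (forall k i, (1 <= k <= M)%N -> (i < N)%N -> 0 < rho k i) ->
  forall m, (1 <= m <= M)%N ->
  exists (rs th : nat -> nat -> R),
    (forall k i, (1 <= k <= m)%N -> (i < N)%N -> between (rs k i) (rho k.-1 i) (rho k i)) /\
    (forall k i, (1 <= k <= m)%N -> (i.+2 <= N)%N -> between (th k i) (rho k i) (rho k i.+1)) /\
    let N1 := dt ^+ 2 * dx / (2 * (gamma - 1)) *
      \sum_(1 <= k < m.+1) \sum_(0 <= i < N)
         pres2 a gamma (rs k i) * ((rho k i - rho k.-1 i) / dt) ^+ 2 in
    let N2 := dt * dx ^+ 2 / (2 * (gamma - 1)) *
      \sum_(1 <= k < m.+1) \sum_(0 <= i < N.-1)
         pres2 a gamma (th k i) * ((rho k i.+1 - rho k i) / dx) ^+ 2 * `|u k i.+1| in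
    let N3 := dt ^+ 2 * dx / 2 *
      \sum_(1 <= k < m.+1) \sum_(0 <= i < N)
         rho k.-1 i * ((uhat u k i - uhat u k.-1 i) / dt) ^+ 2 in
    let N4 := dt * dx ^+ 2 / 2 *
      \sum_(1 <= k < m.+1) \sum_(0 <= i < N.-1)
         `|Up_ru N rho u k i.+1| * ((uhat u k i.+1 - uhat u k i) / dx) ^+ 2 in
    [/\ energy N dx a gamma rho u m
        + mu * dt * dx * \sum_(1 <= k < m.+1) \sum_(0 <= i < N) ((u k i.+1 - u k i) / dx) ^+ 2
        + N1 + N2 + N3 + N4
        = energy N dx a gamma rho u 0%N,
      0 <= N1, 0 <= N2, 0 <= N3 & 0 <= N4].
Proof.
move=> L0 mu0 a0 g1 T0 HN M1 dx dt mrho fin pos0 ubd rho0i u0i sch rpos m /andP[m1 mM].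
have Nr0 : (0 < N%:R :> R) by rewrite ltr0n.
have Mr0 : (0 < M%:R :> R) by rewrite ltr0n.
have dx0 : 0 < dx by rewrite /dx divr_gt0.
have dt0 : 0 < dt by rewrite /dt divr_gt0.
have rho0pos : forall i, (i < N)%N -> 0 < rho 0%N i.
  move=> i Hi; rewrite rho0i // mulr_gt0 ?invr_gt0 //.
  apply: (rho0_pos L gamma rho0 _ _ g1 _ _ _ mrho fin pos0).
  - by rewrite mulr_ge0 // ltW.
  - by rewrite ltr_pM2r // ltr_nat.
  - apply: (@le_trans _ _ (N%:R * dx)); first by rewrite ler_pM2r // ler_nat.
    by rewrite /dx mulrC divfK // gt_eqF.
have rposall : forall k i, (k <= M)%N -> (i < N)%N -> 0 < rho k i.
  move=> [|k] i kM Hi; first exact: rho0pos.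
  by apply: rpos.
have HPrs : forall p : nat * nat, exists x : R,
  (1 <= p.1 <= M)%N -> (p.2 < N)%N ->
  between x (rho p.1.-1 p.2) (rho p.1 p.2) /\
  pres a gamma (rho p.1.-1 p.2) - pres a gamma (rho p.1 p.2)
    - dp a gamma (rho p.1 p.2) * (rho p.1.-1 p.2 - rho p.1 p.2)
  = pres2 a gamma x * (rho p.1.-1 p.2 - rho p.1 p.2) ^+ 2 / 2.
  move=> [k i] /=.
  have [/andP[k1 kM]|nk] := boolP (1 <= k <= M)%N; last first.
    by exists 0 => /= [].
  have [Hi|nHi] := boolP (i < N)%N; last first.
    by exists 0 => /= _ [].
  have p1 := rposall k i kM Hi.
  have p0 : 0 < rho k.-1 i by apply: rposall => //; apply: leq_trans (leq_pred k) kM.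
  have [xi [bt TT]] := taylor2 a gamma (rho k i) (rho k.-1 i) p1 p0.
  by exists xi => _ _; split => //; exact: between_sym.
have [rs0 Hrs] := choice HPrs.
have HPth : forall p : nat * nat, exists x : R,
  (1 <= p.1 <= M)%N -> (p.2.+2 <= N)%N ->
  between x (rho p.1 p.2) (rho p.1 p.2.+1) /\
  (rho p.1 p.2 * posp (u p.1 p.2.+1) + rho p.1 p.2.+1 * negp (u p.1 p.2.+1))
    * (dp a gamma (rho p.1 p.2) - dp a gamma (rho p.1 p.2.+1))
  = (gamma - 1) * u p.1 p.2.+1 * (pres a gamma (rho p.1 p.2) - pres a gamma (rho p.1 p.2.+1))
    + `|u p.1 p.2.+1| * (pres2 a gamma x * (rho p.1 p.2.+1 - rho p.1 p.2) ^+ 2 / 2).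
  move=> [k i] /=.
  have [/andP[k1 kM]|nk] := boolP (1 <= k <= M)%N; last first.
    by exists 0 => /= [].
  have [Hi|nHi] := boolP (i.+2 <= N)%N; last first.
    by exists 0 => /= _ [].
  have p0 := rposall k i kM (ltnW Hi).
  have p1 := rposall k i.+1 kM Hi.
  have [xi [bt TT]] := node_pres a gamma (rho k i) (rho k i.+1) (u k i.+1) p0 p1.
  by exists xi => _ _; split.
have [th0 Hth] := choice HPth.
exists (fun k i => rs0 (k, i)), (fun k i => th0 (k, i)).
split.
  move=> k i /andP[k1 km] Hi; have [] // := Hrs (k, i); rewrite /= k1 /=.
  exact: leq_trans km mM.
split.
  move=> k i /andP[k1 km] Hi; have [] // := Hth (k, i); rewrite /= k1 /=.
  exact: leq_trans km mM.
have pres2_ge0 : forall x, 0 <= pres2 a gamma x.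
  move=> x; rewrite /pres2 !mulr_ge0 ?powR_ge0 ?subr_ge0 ?ltW //.
  exact: lt_trans ltr01 g1.
have g1' : 0 < gamma - 1 by rewrite subr_gt0.
move=> N1' N2' N3' N4'.
pose X k :=
  mu * dt * dx * \sum_(0 <= i < N) ((u k i.+1 - u k i) / dx) ^+ 2
  + dt ^+ 2 * dx / (2 * (gamma - 1)) *
      \sum_(0 <= i < N) pres2 a gamma (rs0 (k, i)) * ((rho k i - rho k.-1 i) / dt) ^+ 2
  + dt * dx ^+ 2 / (2 * (gamma - 1)) *
      \sum_(0 <= i < N.-1) pres2 a gamma (th0 (k, i)) * ((rho k i.+1 - rho k i) / dx) ^+ 2 * `|u k i.+1|
  + dt ^+ 2 * dx / 2 *
      \sum_(0 <= i < N) rho k.-1 i * ((uhat u k i - uhat u k.-1 i) / dt) ^+ 2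
  + dt * dx ^+ 2 / 2 *
      \sum_(0 <= i < N.-1) `|Up_ru N rho u k i.+1| * ((uhat u k i.+1 - uhat u k i) / dx) ^+ 2.
split.
- have -> : energy N dx a gamma rho u m
      + mu * dt * dx * \sum_(1 <= k < m.+1) \sum_(0 <= i < N) ((u k i.+1 - u k i) / dx) ^+ 2
      + N1' + N2' + N3' + N4' = energy N dx a gamma rho u m + \sum_(1 <= k < m.+1) X k.
    rewrite /X /N1' /N2' /N3' /N4' !big_split /= -!mulr_sumr; ring.
  apply: telesc => k /andP[k1 km].
  have kM : (k <= M)%N := leq_trans km mM.
  have [uk0 ukN mass mom] := sch k (introT andP (conj k1 kM)).
  rewrite /X !addrA.
  apply: (step R N dx dt mu a gamma rho u k (fun i => rs0 (k, i)) (fun i => th0 (k, i)) HN dx0 dt0 g1 uk0 ukN mass mom).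
  + by move=> i Hi; apply: rposall.
  + move=> i Hi; have [] // := Hrs (k, i); by rewrite /= k1.
  + move=> i Hi; have [] // := Hth (k, i); by rewrite /= k1.
- rewrite /N1'; apply: mulr_ge0.
    by apply/ltW; rewrite divr_gt0 ?mulr_gt0 ?exprn_gt0 ?invr_gt0.
  apply: sumr_ge0 => k _; apply: sumr_ge0 => i _.
  by rewrite mulr_ge0 ?sqr_ge0.
- rewrite /N2'; apply: mulr_ge0.
    by apply/ltW; rewrite divr_gt0 ?mulr_gt0 ?exprn_gt0 ?invr_gt0.
  apply: sumr_ge0 => k _; apply: sumr_ge0 => i _.
  by apply: mulr_ge0; [apply: mulr_ge0; [exact: pres2_ge0 | exact: sqr_ge0] | exact: normr_ge0].
- rewrite /N3'; apply: mulr_ge0.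
    by apply/ltW; rewrite divr_gt0 ?mulr_gt0 ?exprn_gt0 ?invr_gt0.
  rewrite big_nat_cond; apply: sumr_ge0 => k /andP[/andP[k1 km] _].
  rewrite big_nat_cond; apply: sumr_ge0 => i /andP[/andP[_ Hi] _].
  rewrite mulr_ge0 ?sqr_ge0 // ltW //; apply: rposall => //.
  apply: leq_trans (leq_pred k) _; apply: leq_trans mM; by rewrite -ltnS.
- rewrite /N4'; apply: mulr_ge0.
    by apply/ltW; rewrite divr_gt0 ?mulr_gt0 ?exprn_gt0 ?invr_gt0.
  apply: sumr_ge0 => k _; apply: sumr_ge0 => i _.
  by apply: mulr_ge0; [exact: normr_ge0 | exact: sqr_ge0].
Qed.
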